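(* Let $n\geq 4$, let $B\subset\mathbb{R}^{n+1}$ be a symmetric convex body and let $\Gamma_1,\Gamma_2\subset\mathbb{R}^{n+1}$ be two distinct linear hyperplanes such that $K_i=\Gamma_i\cap B$ ($i=1,2$) are affine symmetric bodies of revolution with axes of revolution $L_i$ and associated hyperplanes of revolution $H_i\subset\Gamma_i$. If $L_1\subset H_2$, then $K_1$ is an ellipsoid.
   Context: A symmetric convex body is a compact convex set with nonempty interior invariant under $x\mapsto-x$. A symmetric convex body $K\subset\mathbb{R}^m$ is a symmetric body of revolution if it admits an axis of revolution: a 1-dimensional linear subspace $L$ such that every section of $K$ by an affine hyperplane $A$ orthogonal to $L$ is a closed Euclidean $(m-1)$-ball in $A$ centered at $A\cap L$ (possibly empty or a point); $L^\perp$ is the associated hyperplane of revolution. An affine symmetric body of revolution (in an $m$-dimensional linear subspace) is a convex body linearly equivalent to a symmetric body of revolution; the images of an axis and its associated hyperplane under the linear equivalence are called an axis and associated hyperplane of revolution of it. An ellipsoid is a set affinely equivalent to a closed Euclidean unit ball. *)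

(* Defs.v *)
From Stdlib Require Import Reals List.
From mathcomp Require Import ssreflect ssrfun ssrbool eqtype ssrnat seq fintype bigop.

Open Scope R_scope.

Definition vec (m : nat) := 'I_m -> R.
Definition vset (m : nat) := vec m -> Prop.

Definition vzero {m} : vec m := fun _ => 0.
Definition vadd {m} (x y : vec m) : vec m := fun i => x i + y i.
Definition vscale {m} (c : R) (x : vec m) : vec m := fun i => c * x i.
Definition vopp {m} (x : vec m) : vec m := fun i => - x i.
Definition vsub {m} (x y : vec m) : vec m := fun i => x i - y i.
Definition dot {m} (x y : vec m) : R := \big[Rplus/0]_(i < m) (x i * y i).
Definition vnorm {m} (x : vec m) : R := sqrt (dot x x).

Definition is_open {m} (U : vset m) : Prop :=
  forall x, U x -> exists r, 0 < r /\ forall y, vnorm (vsub y x) < r -> U y.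

Definition is_compact {m} (K : vset m) : Prop :=
  forall (I : Type) (U : I -> vset m),
    (forall i, is_open (U i)) ->
    (forall x, K x -> exists i, U i x) ->
    exists l : list I, forall x, K x -> exists i, In i l /\ U i x.

Definition is_convex {m} (K : vset m) : Prop :=
  forall x y t, K x -> K y -> 0 <= t <= 1 ->
    K (vadd (vscale (1 - t) x) (vscale t y)).

Definition nonempty_interior {m} (K : vset m) : Prop :=
  exists x r, 0 < r /\ forall y, vnorm (vsub y x) < r -> K y.

Definition is_symmetric {m} (K : vset m) : Prop := forall x, K x -> K (vopp x).

Definition sym_convex_body {m} (K : vset m) : Prop :=
  is_compact K /\ is_convex K /\ nonempty_interior K /\ is_symmetric K.

Definition lin_hyperplane {m} (G : vset m) : Prop :=
  exists a : vec m, a <> vzero /\ forall x, G x <-> dot a x = 0.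

(* L = span u (u <> 0); the affine
   hyperplanes orthogonal to L are A_c = {x | <x,u> = c <u,u>}, with
   A_c /\ L = {c u}. *)
Definition axis_of_revolution {m} (K L H : vset m) : Prop :=
  exists u : vec m, u <> vzero /\
    (forall x, L x <-> exists t, x = vscale t u) /\
    (forall x, H x <-> dot x u = 0) /\
    forall c : R,
      (forall x, dot x u = c * dot u u -> ~ K x) \/
      exists r, 0 <= r /\
        forall x, dot x u = c * dot u u ->
          (K x <-> vnorm (vsub x (vscale c u)) <= r).

Definition sym_body_of_revolution {m} (K : vset m) : Prop :=
  sym_convex_body K /\ exists L H, axis_of_revolution K L H.

Definition image {m N} (T : vec m -> vec N) (S : vset m) : vset N :=
  fun y => exists x, S x /\ T x = y.

Definition is_linear {m N} (T : vec m -> vec N) : Prop :=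
  (forall x y, T (vadd x y) = vadd (T x) (T y)) /\
  (forall c x, T (vscale c x) = vscale c (T x)).

Definition affine_sym_body_of_revolution (m N : nat) (V K L H : vset N) : Prop :=
  exists (T : vec m -> vec N) (K' L' H' : vset m),
    is_linear T /\ injective T /\ (forall y, V y <-> exists x, T x = y) /\
    sym_convex_body K' /\ axis_of_revolution K' L' H' /\
    (forall y, K y <-> image T K' y) /\
    (forall y, L y <-> image T L' y) /\
    (forall y, H y <-> image T H' y).

Definition is_ellipsoid (d N : nat) (K : vset N) : Prop :=
  exists (T : vec d -> vec N) (b : vec N),
    is_linear T /\ injective T /\
    forall y, K y <-> exists x, vnorm x <= 1 /\ vadd (T x) b = y.

(* Main.v *)
Require Import Defs.
From Stdlib Require Import Reals Lra Psatz FunctionalExtensionality Classical.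
From HB Require Import structures.
From mathcomp Require Import ssreflect ssrfun ssrbool eqtype ssrnat seq fintype bigop.
From mathcomp Require Import ssralg matrix mxalgebra Rstruct zify.
Open Scope R_scope.

Lemma Rplus_assoc' : associative Rplus. Proof. move=> *; rewrite Rplus_assoc //. Qed.
HB.instance Definition _ := Monoid.isComLaw.Build R 0%R Rplus Rplus_assoc' Rplus_comm Rplus_0_l.

Section V.
Context {m : nat}.
Implicit Types x y z : vec m.

Lemma dot_addl x y z : dot (vadd x y) z = dot x z + dot y z.
Proof.
rewrite /dot /vadd -big_split /=; apply: eq_bigr => i _; ring.
Qed.
Lemma dot_scalel c x y : dot (vscale c x) y = c * dot x y.
Proof.
rewrite /dot (big_morph (fun s => c * s) (id1 := 0) (op1 := Rplus)).
  by apply: eq_bigr => i _; rewrite /vscale; ring.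
by move=> a b; ring.
by ring.
Qed.
Lemma dot_comm x y : dot x y = dot y x.
Proof. rewrite /dot; apply: eq_bigr => i _; ring. Qed.
Lemma dot_addr x y z : dot z (vadd x y) = dot z x + dot z y.
Proof. by rewrite dot_comm dot_addl !(dot_comm z). Qed.
Lemma dot_scaler c x y : dot y (vscale c x) = c * dot y x.
Proof. by rewrite dot_comm dot_scalel dot_comm. Qed.
Lemma dot_subl x y z : dot (vsub x y) z = dot x z - dot y z.
Proof.
have -> : vsub x y = vadd x (vscale (-1) y).
  by apply: functional_extensionality => i; rewrite /vsub /vadd /vscale; ring.
rewrite dot_addl dot_scalel; ring.
Qed.
Lemma dot_subr x y z : dot z (vsub x y) = dot z x - dot z y.
Proof. by rewrite dot_comm dot_subl !(dot_comm z). Qed.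
Lemma dot_ge0 x : 0 <= dot x x.
Proof.
rewrite /dot; apply: (big_ind (fun s => 0 <= s)) => [|a b Ha Hb|i _]; nra.
Qed.
Lemma dot_eq0 x : dot x x = 0 -> x = vzero.
Proof.
move=> H; apply: functional_extensionality => i; rewrite /vzero.
move: H; rewrite /dot (bigD1 i) //=.
set S := (X in _ + X = _) => Hs.
have Hb : 0 <= S by rewrite /S; apply: (big_ind (fun s => 0 <= s)) => [|a b Ha Hb|j _]; nra.
have Hx : x i * x i = 0 by have := Rle_0_sqr (x i); rewrite /Rsqr; lra.
by case: (Rmult_integral _ _ Hx).
Qed.
Lemma dot_pos x : x <> vzero -> 0 < dot x x.
Proof. move=> H; have := dot_ge0 x; case/Rle_lt_or_eq_dec => // /esym /dot_eq0 //. Qed.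
Lemma vnorm_le x r : 0 <= r -> (vnorm x <= r <-> dot x x <= r * r).
Proof.
move=> r0; rewrite /vnorm; have := dot_ge0 x => d0; split => H.
  have := sqrt_sqrt _ d0; have := sqrt_pos (dot x x); nra.
have -> : r = sqrt (r * r) by rewrite sqrt_square.
exact: sqrt_le_1_alt.
Qed.
End V.

Definition ei {m} (l : 'I_m) : vec m := fun i => if i == l then 1 else 0.

Lemma lin_decomp m (g : vec m -> R) :
  (forall x y, g (vadd x y) = g x + g y) -> (forall c x, g (vscale c x) = c * g x) ->
  forall x, g x = \big[Rplus/0]_(l < m) (x l * g (ei l)).
Proof.
move=> gadd gsc x.
have Ex : x = \big[vadd/vzero]_(l < m) vscale (x l) (ei l).
  apply: functional_extensionality => i.
  rewrite (big_morph (fun v : vec m => v i) (id1 := 0) (op1 := Rplus)) //.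
  rewrite (bigD1 i) //= big1 /vscale /ei ?eqxx; first ring.
  by move=> l Hl; rewrite eq_sym (negbTE Hl); ring.
rewrite {1}Ex (big_morph g (id1 := 0) (op1 := Rplus)) //.
  by apply: eq_bigr => l _; rewrite gsc.
have -> : (vzero : vec m) = vscale 0 vzero.
  by apply: functional_extensionality => i; rewrite /vscale /vzero; ring.
by rewrite gsc; ring.
Qed.

Lemma ker_nonzero (m : nat) (I : finType) (f : I -> vec m -> R) :
  (#|I| < m)%N ->
  (forall j x y, f j (vadd x y) = f j x + f j y) ->
  (forall j c x, f j (vscale c x) = c * f j x) ->
  exists x, x <> vzero /\ forall j, f j x = 0.
Proof.
move=> Hcard fadd fsc.
pose A : 'M[R]_(m, #|I|) := (\matrix_(i, j) f (enum_val j) (ei i))%R.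
have rk : (0 < \rank (kermx A))%N.
  rewrite mxrank_ker subn_gt0; exact: leq_ltn_trans (rank_leq_col A) Hcard.
have nz : kermx A != 0%R by rewrite -mxrank_eq0 -lt0n.
have [i [k Hik]] : exists i k, kermx A i k <> 0.
  apply: NNPP => Hn; move/negP: nz; apply; apply/eqP/matrixP => i k; rewrite [RHS]mxE.
  apply: NNPP => H; apply: Hn; exists i, k => E; apply: H; exact E.
exists (fun l => kermx A i l); split.
  by move=> E; apply: Hik; have := congr1 (fun v : vec m => v k) E.
move=> jj; rewrite (@lin_decomp m (f jj) (fadd jj) (fsc jj)).
have E := congr1 (fun M : 'M[R]_(_, _) => M i (enum_rank jj)) (mulmx_ker A).
move: E; rewrite /= !mxE => E; rewrite -[RHS]E.
apply: eq_bigr => l _; rewrite /A [X in _ = (_ * X)%R]mxE enum_rankK //.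
Qed.

Lemma dot_zerol {m} (y : vec m) : dot vzero y = 0.
Proof. rewrite /dot big1 // => i _; rewrite /vzero; ring. Qed.

Lemma vnorm_lt {m} (x : vec m) r : 0 <= r -> dot x x < r * r -> vnorm x < r.
Proof.
move=> r0 H; rewrite /vnorm; have -> : r = sqrt (r * r) by rewrite sqrt_square.
apply: sqrt_lt_1_alt; split => //; exact: dot_ge0.
Qed.

Lemma lin_zero {m N} (T : vec m -> vec N) : is_linear T -> T vzero = vzero.
Proof.
case=> _ Tsc; have -> : (vzero : vec m) = vscale 0 vzero.
  by apply: functional_extensionality => i; rewrite /vscale /vzero; ring.
rewrite Tsc; apply: functional_extensionality => i; rewrite /vscale /vzero; ring.
Qed.

Ltac dexp := rewrite ?dot_subl ?dot_subr ?dot_addl ?dot_addr ?dot_scalel ?dot_scaler.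

Theorem mainTheorem12 (n : nat) (B : vset n.+1) (G1 G2 L1 L2 H1 H2 : vset n.+1) :
  (4 <= n)%coq_nat ->
  sym_convex_body B ->
  lin_hyperplane G1 -> lin_hyperplane G2 ->
  ~ (forall x, G1 x <-> G2 x) ->
  affine_sym_body_of_revolution n n.+1 G1 (fun x => G1 x /\ B x) L1 H1 ->
  affine_sym_body_of_revolution n n.+1 G2 (fun x => G2 x /\ B x) L2 H2 ->
  (forall x, L1 x -> H2 x) ->
  is_ellipsoid n n.+1 (fun x => G1 x /\ B x).
Proof.
move=> Hn HB HG1 HG2 Hneq HA1 HA2 HL.
case: HA1 => T1 [K1 [L1' [H1' [T1lin [T1inj [T1V [K1scb [K1ax [K1eq [L1eq H1eq]]]]]]]]]].
case: HA2 => T2 [K2 [L2' [H2' [T2lin [T2inj [T2V [K2scb [K2ax [K2eq [L2eq H2eq]]]]]]]]]].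
have T10 := lin_zero T1 T1lin; have T20 := lin_zero T2 T2lin.
case: T1lin => T1add T1sc; case: T2lin => T2add T2sc.
case: K1ax => u1 [u1nz [L1u [H1u sl1]]].
case: K2ax => u2 [u2nz [L2u [H2u sl2]]].
have F1 : forall x, K1 x <-> B (T1 x).
  move=> x; split => [Kx|Bx].
    by case: (proj2 (K1eq (T1 x)) (ex_intro _ x (conj Kx erefl))).
  have [x' [Kx' E]] := proj1 (K1eq (T1 x)) (conj (proj2 (T1V _) (ex_intro _ x erefl)) Bx).
  by rewrite -(T1inj _ _ E).
have F2 : forall x, K2 x <-> B (T2 x).
  move=> x; split => [Kx|Bx].
    by case: (proj2 (K2eq (T2 x)) (ex_intro _ x (conj Kx erefl))).
  have [x' [Kx' E]] := proj1 (K2eq (T2 x)) (conj (proj2 (T2V _) (ex_intro _ x erefl)) Bx).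
  by rewrite -(T2inj _ _ E).
have [h2 [Hh2 Eh2]] : exists h2, H2' h2 /\ T2 h2 = T1 u1.
  have : L1 (T1 u1).
    apply/L1eq; exists u1; split => //; apply/L1u; exists 1.
    by apply: functional_extensionality => i; rewrite /vscale; ring.
  by move/HL/H2eq => [h2 [? ?]]; exists h2.
have h2u2 : dot h2 u2 = 0 by apply/H2u.
pose pl (z : vec (n + n)) : vec n := fun i => z (lshift n i).
pose pr (z : vec (n + n)) : vec n := fun i => z (rshift n i).
pose f (j : ('I_n.+1 + bool)%type) (z : vec (n + n)) : R :=
  match j with inl k => T1 (pl z) k - T2 (pr z) k
  | inr true => dot (pl z) u1 | inr false => dot (pr z) u2 end.
have [z [znz fz]] : exists z, z <> vzero /\ forall j, f j z = 0.
  apply: ker_nonzero.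
  - rewrite card_sum card_ord card_bool; move/leP: Hn => Hn'; lia.
  - move=> [k|[]] x y /=.
    + change (pl (vadd x y)) with (vadd (pl x) (pl y)).
      change (pr (vadd x y)) with (vadd (pr x) (pr y)).
      rewrite T1add T2add /vadd; ring.
    + exact: dot_addl.
    + exact: dot_addl.
  - move=> [k|[]] c x /=.
    + change (pl (vscale c x)) with (vscale c (pl x)).
      change (pr (vscale c x)) with (vscale c (pr x)).
      rewrite T1sc T2sc /vscale; ring.
    + exact: dot_scalel.
    + exact: dot_scalel.
set p := pl z; set q := pr z.
have Tp : T1 p = T2 q.
  apply: functional_extensionality => k; have := fz (inl k); rewrite /= /p /q; lra.
have pu1 : dot p u1 = 0 := fz (inr true).
have qu2 : dot q u2 = 0 := fz (inr false).
have pnz : p <> vzero.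
  move=> p0; apply: znz.
  have q0 : q = vzero by apply: T2inj; rewrite -Tp p0 T10 T20.
  apply: functional_extensionality => i; rewrite -(splitK i).
  case: (split i) => [k|k] /=.
    by have := congr1 (fun v : vec n => v k) p0.
  by have := congr1 (fun v : vec n => v k) q0.
have qnz : q <> vzero.
  by move=> q0; apply: pnz; apply: T1inj; rewrite Tp q0 T10 T20.
have h2nz : h2 <> vzero.
  by move=> h0; apply: u1nz; apply: T1inj; rewrite -Eh2 h0 T10 T20.
pose a := dot u1 u1; pose A := dot h2 h2; pose D := dot q q; pose P := dot p p.
pose C := dot h2 q.
have apos : 0 < a := dot_pos _ u1nz.
have Apos : 0 < A := dot_pos _ h2nz.
have Dpos : 0 < D := dot_pos _ qnz.
have Ppos : 0 < P := dot_pos _ pnz.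
pose Y := fun s t => vadd (vscale s u1) (vscale t p).
have KN : forall s t, K1 (Y s t) <-> K2 (vadd (vscale s h2) (vscale t q)).
  move=> s t; rewrite F1 F2 /Y T1add !T1sc T2add !T2sc Tp Eh2 //.
have YU : forall s t, dot (Y s t) u1 = s * a.
  move=> s t; rewrite /Y; dexp; rewrite pu1 /a. ring.
have YD : forall s t, dot (vsub (Y s t) (vscale s u1)) (vsub (Y s t) (vscale s u1)) = t * t * P.
  move=> s t; rewrite /Y; dexp; rewrite pu1 (dot_comm u1 p) pu1 /P. ring.
have SL : forall s, (forall t, ~ K1 (Y s t)) \/
    exists r, 0 <= r /\ forall t, K1 (Y s t) <-> t * t * P <= r * r.
  move=> s; case: (sl1 s) => [Emp|[r [r0 Hr]]].
    by left => t; apply: Emp; rewrite YU.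
  right; exists r; split => // t; rewrite Hr ?YU // vnorm_le // YD //.
have center : forall x, K1 x -> K1 (Y (dot x u1 / a) 0).
  move=> x Kx; case: (SL (dot x u1 / a)) => [Emp|[r [r0 Hr]]].
    case: (sl1 (dot x u1 / a)) => [Emp2|[r' [r0' Hr']]].
      by exfalso; apply: (Emp2 x) => //; rewrite /a; field; rewrite -/a; lra.
    exfalso; apply: (Emp 0); apply/Hr'; first by rewrite YU.
    by apply/vnorm_le => //; rewrite YD; nra.
  by apply/Hr; nra.
case: K1scb => _ [_ [[x0 [rho [rhopos Hball]]] _]].
have Kx0 : K1 x0.
  apply: Hball; apply: vnorm_lt; first lra.
  have -> : vsub x0 x0 = vzero by apply: functional_extensionality => i; rewrite /vsub /vzero; ring.
  rewrite dot_zerol; nra.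
pose kk := rho / (a + 1).
have kkpos : 0 < kk by rewrite /kk; apply: Rdiv_lt_0_compat; lra.
have Kx1 : K1 (vadd x0 (vscale kk u1)).
  apply: Hball; apply: vnorm_lt; first lra.
  have -> : vsub (vadd x0 (vscale kk u1)) x0 = vscale kk u1
    by apply: functional_extensionality => i; rewrite /vsub /vadd /vscale; ring.
  dexp; rewrite -/a /kk.
  have Ha1 : a < (a + 1) * (a + 1) by nra.
  apply: (Rmult_lt_reg_r ((a + 1) * (a + 1))); first nra.
  field_simplify; try lra. nra.
case: (sl2 0) => [Emp2|[r0 [r0ge Hr0]]].
  exfalso; have := proj1 (KN _ _) (center _ Kx0); apply: Emp2.
  dexp; rewrite h2u2 qu2; ring.
have KQ : forall s t, K1 (Y s t) <-> A*s*s + 2*C*s*t + D*t*t <= r0*r0.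
  move=> s t; rewrite KN Hr0; last by dexp; rewrite h2u2 qu2; ring.
  rewrite vnorm_le //.
  have -> : dot (vsub (vadd (vscale s h2) (vscale t q)) (vscale 0 u2))
               (vsub (vadd (vscale s h2) (vscale t q)) (vscale 0 u2))
           = A*s*s + 2*C*s*t + D*t*t.
    by dexp; rewrite (dot_comm q h2) /A /C /D; ring.
  done.
have r0pos : 0 < r0.
  case: (Rle_lt_or_eq_dec _ _ r0ge) => // r00; exfalso.
  have cz : forall x, K1 x -> dot x u1 = 0.
    move=> x Kx; have := proj1 (KQ _ _) (center x Kx); rewrite -r00 => HQ.
    have cz : dot x u1 / a = 0.
      set c := dot x u1 / a in HQ *.
      have c2 : c * c <= 0 by nra.
      have c3 : c * c = 0 by have := Rle_0_sqr c; rewrite /Rsqr; lra.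
      by case: (Rmult_integral _ _ c3).
    have -> : dot x u1 = (dot x u1 / a) * a by field; lra.
    by rewrite cz; ring.
  have := cz _ Kx1; dexp; rewrite (cz _ Kx0) -/a; nra.
have Qnn : forall s t, 0 <= A*s*s + 2*C*s*t + D*t*t.
  move=> s t; have := dot_ge0 (vadd (vscale s h2) (vscale t q)).
  have -> : dot (vadd (vscale s h2) (vscale t q)) (vadd (vscale s h2) (vscale t q))
           = A*s*s + 2*C*s*t + D*t*t.
    by dexp; rewrite (dot_comm q h2) /A /C /D; ring.
  done.
have sym : forall s t, K1 (Y s t) -> K1 (Y s (- t)).
  move=> s t; case: (SL s) => [Emp|[r [rge Hr]]]; first by move/Emp.
  by rewrite !Hr; nra.
have Cb : forall b, b * b = 1 -> C * b <= 0.
  move=> b bb; apply: Rnot_lt_le => Cbpos.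
  have Q2nn : 0 <= A - 2*C*b + D by have := Qnn 1 (- b); nra.
  pose L := 2*r0*r0 / (2*A + 2*D).
  have Lpos : 0 < L by rewrite /L; apply: Rdiv_lt_0_compat; nra.
  have LQ : L * (2*A + 2*D) = 2 * r0 * r0 by rewrite /L; field; nra.
  have LCb : 0 < L * (C * b) by apply: Rmult_lt_0_compat.
  pose lam := sqrt L.
  have ll : lam * lam = L by rewrite /lam; apply: sqrt_sqrt; lra.
  pose t0 := - (lam * b).
  have E1 : A*lam*lam + 2*C*lam*t0 + D*t0*t0 = (lam*lam) * (A - 2*C*b + D*(b*b))
    by rewrite /t0; ring.
  rewrite ll bb in E1.
  have K0 : K1 (Y lam t0) by apply/KQ; rewrite E1; nra.
  have := proj1 (KQ _ _) (sym _ _ K0).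
  have -> : A*lam*lam + 2*C*lam*(-t0) + D*(-t0)*(-t0) = (lam*lam) * (A + 2*C*b + D*(b*b))
    by rewrite /t0; ring.
  rewrite ll bb => HQ1.
  nra.
have Cz : C = 0.
  have := Cb 1 ltac:(ring); have := Cb (-1) ltac:(ring); lra.
pose cc := fun x : vec n => dot x u1 / a.
pose Phi := fun x : vec n => A * (cc x * cc x) + D * (dot x x - a * (cc x * cc x)) / P.
have char : forall x, K1 x <-> Phi x <= r0 * r0.
  move=> x; rewrite /Phi; set c := cc x.
  have xc : dot x u1 = c * a by rewrite /c /cc; field; lra.
  have dist : dot (vsub x (vscale c u1)) (vsub x (vscale c u1)) = dot x x - a * (c * c).
    by dexp; rewrite (dot_comm u1 x) xc -/a; ring.
  have dd : 0 <= dot x x - a * (c * c) by rewrite -dist; apply: dot_ge0.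
  have iP : 0 < / P by apply: Rinv_0_lt_compat.
  case: (sl1 c) => [Emp|[r [rge Hr]]].
    have nK : ~ K1 x by apply: Emp.
    have Ac : r0 * r0 < A * (c * c).
      apply: Rnot_le_lt => H; apply: (Emp (Y c 0)); first by rewrite YU.
      by apply/KQ; nra.
    have : 0 <= D * (dot x x - a * (c * c)) / P.
      by apply: Rmult_le_pos => //; [nra | lra].
    split => // HH; lra.
  rewrite Hr // vnorm_le // dist.
  have Kc : K1 (Y c 0) by apply/Hr; [rewrite YU | apply/vnorm_le => //; rewrite YD; nra].
  have Ac : A * c * c <= r0 * r0 by have := proj1 (KQ _ _) Kc; rewrite Cz; nra.
  have sP : sqrt P * sqrt P = P by apply: sqrt_sqrt; lra.
  have sPpos : 0 < sqrt P by apply: sqrt_lt_R0.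
  pose t1 := r / sqrt P.
  have t1P : t1 * t1 * P = r * r.
    have -> : t1 * t1 * P = r * r * (P / (sqrt P * sqrt P)) by rewrite /t1; field; lra.
    by rewrite sP; field; lra.
  have K1t : K1 (Y c t1) by apply/Hr; [rewrite YU | apply/vnorm_le => //; rewrite YD; lra].
  have H1t := proj1 (KQ _ _) K1t; rewrite Cz in H1t.
  pose W := (r0 * r0 - A * c * c) / D.
  have Wnn : 0 <= W by rewrite /W; apply: Rmult_le_pos; [lra | apply/Rlt_le/Rinv_0_lt_compat; lra].
  pose t2 := sqrt W.
  have t2t : t2 * t2 = W by apply: sqrt_sqrt.
  have DW : D * W = r0*r0 - A*c*c by rewrite /W; field; lra.
  have K2t : K1 (Y c t2).
    apply/KQ; rewrite Cz.
    have -> : A * c * c + 2 * 0 * c * t2 + D * t2 * t2 = A*c*c + D * (t2 * t2) by ring.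
    rewrite t2t DW; lra.
  have H2t := proj1 (Hr _ (YU _ _)) K2t; move/vnorm_le: H2t; rewrite YD => // H2t.
  have rr : r * r = W * P by nra.
  have PiP : P * / P = 1 by field; lra.
  split => HH.
    have : D * (dot x x - a * (c * c)) * / P <= D * W * P * / P.
      apply: Rmult_le_compat_r; lra || nra.
    nra.
  have : D * (dot x x - a * (c * c)) <= D * (W * P).
    have : D * (dot x x - a * (c * c)) / P * P <= D * W * P by nra.
    have -> : D * (dot x x - a * (c * c)) / P * P = D * (dot x x - a * (c * c)) by field; lra.
    lra.
  nra.
pose k1 := sqrt (r0 * r0 * a / A); pose k2 := sqrt (r0 * r0 * P / D).
have r0a : 0 < r0 * r0 * a by apply: Rmult_lt_0_compat; nra.
have r0P : 0 < r0 * r0 * P by apply: Rmult_lt_0_compat; nra.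
have k1pos : 0 < k1 by rewrite /k1; apply: sqrt_lt_R0; apply: Rdiv_lt_0_compat.
have k2pos : 0 < k2 by rewrite /k2; apply: sqrt_lt_R0; apply: Rdiv_lt_0_compat.
have k1k1 : k1 * k1 = r0 * r0 * a / A by rewrite /k1; apply: sqrt_sqrt; apply/Rlt_le/Rdiv_lt_0_compat.
have k2k2 : k2 * k2 = r0 * r0 * P / D by rewrite /k2; apply: sqrt_sqrt; apply/Rlt_le/Rdiv_lt_0_compat.
pose S := fun y : vec n => vadd (vscale k2 y) (vscale ((k1 - k2) * (dot y u1 / a)) u1).
pose Si := fun x : vec n => vadd (vscale (/ k2) x) (vscale ((/ k1 - / k2) * (dot x u1 / a)) u1).
have dS : forall y, dot (S y) u1 = k1 * dot y u1.
  by move=> y; rewrite /S; dexp; rewrite -/a; field; lra.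
have dSi : forall x, dot (Si x) u1 = / k1 * dot x u1.
  by move=> x; rewrite /Si; dexp; rewrite -/a; field; lra.
have SSi : forall x, S (Si x) = x.
  move=> x; apply: functional_extensionality => i.
  rewrite {1}/S dSi /Si /vadd /vscale; field; lra.
have SiS : forall y, Si (S y) = y.
  move=> y; apply: functional_extensionality => i.
  rewrite {1}/Si dS /S /vadd /vscale; field; lra.
have PhiS : forall y, Phi (S y) = r0 * r0 * dot y y.
  move=> y; rewrite /Phi /cc dS.
  have -> : dot (S y) (S y) = k2 * k2 * dot y y + (k1 * k1 - k2 * k2) * (dot y u1 * dot y u1) / a.
    by rewrite /S; dexp; rewrite (dot_comm u1 y) -/a; field; lra.
  transitivity (A * (k1*k1) * (dot y u1 * dot y u1) / (a*a)
     + D * (k2*k2) * (dot y y - (dot y u1 * dot y u1)/a) / P).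
    field; lra.
  rewrite k1k1 k2k2; field; lra.
exists (fun y => T1 (S y)), vzero; split; [|split].
- split.
  + move=> x y; rewrite -T1add; congr T1; apply: functional_extensionality => i.
    rewrite /S dot_addl /vadd /vscale; field; lra.
  + move=> c x; rewrite -T1sc; congr T1; apply: functional_extensionality => i.
    rewrite /S dot_scalel /vadd /vscale; field; lra.
- by move=> x y /T1inj E; rewrite -(SiS x) -(SiS y) E.
- move=> y; have v0 : forall w : vec n.+1, vadd w vzero = w.
    by move=> w; apply: functional_extensionality => i; rewrite /vadd /vzero; ring.
  split.
  + move=> Hy; have [x' [Kx' E]] := proj1 (K1eq y) Hy.
    exists (Si x'); split; last by rewrite v0 SSi.
    have H := proj1 (char x') Kx'; rewrite -[x'](SSi x') PhiS in H.
    apply/vnorm_le; nra.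
  + move=> [x [Hx <-]]; rewrite v0; apply/K1eq; exists (S x); split => //.
    apply/char; rewrite PhiS; move/vnorm_le: Hx => Hx.
    have := Hx ltac:(lra); nra.
Qed.
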